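(* Let $k\ge1$, let $\Pi_0,\Pi_1,\Pi\in\mathrm{Part}_2(2k)$ with $\Pi_0,\Pi_1$ perfect matchings and $\#(\Pi_0\vee\Pi_1\vee\Pi)=1$, and let $\varphi_0,\varphi_1$ be as follows: for $i=0,1$, $\varphi_i:\{1,\dots,2k\}\to V_i$ is a surjection whose level sets are exactly the parts of $\Pi_i\vee\Pi$, with $V_0\cap V_1=\emptyset$. Assume $\#(\Pi_0\vee\Pi_1)>1$. Then for every $A\in\Pi_0\vee\Pi_1$ there exist $m\in A$, a part $A'\in\Pi_0\vee\Pi_1$ with $A'\ne A$, and $m'\in A'$ such that $\{\varphi_0(m),\varphi_1(m)\}=\{\varphi_0(m'),\varphi_1(m')\}$.
   Context: $\mathrm{Part}(k)$ is the set of set partitions of $\{1,\dots,k\}$; $\Sigma$ refines $\Pi$ if every part of $\Sigma$ lies in a part of $\Pi$; $\Pi\vee\Sigma$ is the finest partition refined by both; a perfect matching is a partition all of whose parts have size 2; $\mathrm{Part}_2(k)$ is the set of partitions all of whose parts have size at least 2. *)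

(* Defs.v *)
(* Set partitions of a finite type T are represented as
   {set {set T}} satisfying MathComp's [partition P [set: T]]
   (blocks cover T, pairwise disjoint, no empty block). *)
From mathcomp Require Import all_boot.
Set Implicit Arguments. Unset Strict Implicit. Unset Printing Implicit Defensive.

Section Parts.
Variable T : finType.

Definition is_part (P : {set {set T}}) : Prop := partition P [set: T].

Definition refines (S P : {set {set T}}) : Prop :=
  forall B, B \in S -> exists2 C, C \in P & B \subset C.

Definition is_join (P Q J : {set {set T}}) : Prop :=
  [/\ is_part J, refines P J, refines Q J &
      forall K, is_part K -> refines P K -> refines Q K -> refines J K].

Definition perfect_matching (P : {set {set T}}) : Prop :=
  is_part P /\ forall B, B \in P -> #|B| = 2.

Definition part2 (P : {set {set T}}) : Prop :=
  is_part P /\ forall B, B \in P -> 2 <= #|B|.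
End Parts.

Definition level_map (T : finType) (U : Type) (V : U -> Prop)
  (phi : T -> U) (P : {set {set T}}) : Prop :=
  (forall m, V (phi m)) /\ (forall v, V v -> exists m, phi m = v) /\
  (forall B : {set T}, B \in P <->
     exists v, V v /\ forall m, m \in B <-> phi m = v).

Definition upair_eq (U : Type) (a b c d : U) : Prop :=
  forall x, (x = a \/ x = b) <-> (x = c \/ x = d).

(* Main.v *)
Require Import Defs.
From mathcomp Require Import all_boot.

Set Implicit Arguments. Unset Strict Implicit.
Section Aux.
Variable T : finType.

Lemma part_cover (P : {set {set T}}) x : is_part P -> exists2 B, B \in P & x \in B.
Proof.
move=> /and3P [/eqP hc _ _].
have : x \in cover P by rewrite hc inE.
by move/bigcupP=> [B hB hx]; exists B.
Qed.

Lemma part_disj (P : {set {set T}}) B C x :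
  is_part P -> B \in P -> C \in P -> x \in B -> x \in C -> B = C.
Proof.
move=> /and3P [_ /trivIsetP ht _] hB hC hxB hxC.
case: (eqVneq B C) => // ne.
by have := ht _ _ hB hC ne; rewrite disjoints_subset => /subsetP /(_ x hxB); rewrite inE hxC.
Qed.

Lemma part_ne0 (P : {set {set T}}) B : is_part P -> B \in P -> exists x, x \in B.
Proof.
move=> /and3P [_ _ h0] hB.
case: (set_0Vmem B) => [e|[x hx]]; last by exists x.
by move: h0; rewrite -e hB.
Qed.

Lemma part2set (A : {set T}) x y : x \in A -> y \notin A ->
  is_part [set A; ~: A].
Proof.
move=> hx hy; apply/and3P; split.
- apply/eqP/setP => z; rewrite inE; apply/bigcupP.
  case hz: (z \in A); first by exists A; rewrite ?inE ?eqxx.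
  by exists (~: A); rewrite !inE ?eqxx ?hz ?orbT.
- apply/trivIsetP => B C; rewrite !inE => /orP[]/eqP-> /orP[]/eqP->; rewrite ?eqxx //.
  + by move=> _; rewrite disjoints_subset setCK.
  + by move=> _; rewrite disjoints_subset.
- rewrite !inE negb_or; apply/andP; split; apply/eqP => e.
  + by move: hx; rewrite -e inE.
  + by move: (in_setC y A); rewrite -e inE (negbTE hy).
Qed.
End Aux.

Theorem lemma3p5 (k : nat) (hk : 0 < k)
  (Pi0 Pi1 Pi J01 J0 J1 Jall : {set {set 'I_(2 * k)}})
  (hPi0 : perfect_matching Pi0) (hPi1 : perfect_matching Pi1) (hPi : part2 Pi)
  (hJ01 : is_join Pi0 Pi1 J01) (hJ0 : is_join Pi0 Pi J0) (hJ1 : is_join Pi1 Pi J1)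
  (hJall : is_join J01 Pi Jall) (hone : #|Jall| = 1)
  (U : Type) (V0 V1 : U -> Prop) (hdisj : forall x, V0 x -> V1 x -> False)
  (phi0 phi1 : 'I_(2 * k) -> U)
  (hphi0 : level_map V0 phi0 J0) (hphi1 : level_map V1 phi1 J1)
  (hgt : 1 < #|J01|) :
  forall A, A \in J01 ->
    exists m, exists A', exists m',
      [/\ m \in A, A' \in J01, A' != A, m' \in A' &
          upair_eq (phi0 m) (phi1 m) (phi0 m') (phi1 m')].
Proof.
move=> A hA.
case: hJ01 => hp01 _ _ _.
case: hJ0 => _ _ r0 _; case: hJ1 => _ _ r1 _.
case: hPi => hpPi _.
case: (boolP [exists B in Pi, exists m in B, exists m' in B, (m \in A) && (m' \notin A)]).
  move=> /existsP [B /andP [hB /existsP [m /andP [hmB /existsP [m' /andP [hm'B /andP [hmA hm'A]]]]]]].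
  have [A' hA' hm'A'] := @part_cover _ _ m' hp01.
  exists m, A', m'; split => //.
    by apply/eqP => e; move: hm'A; rewrite -e hm'A'.
  have [C0 hC0 sub0] := r0 B hB; have [C1 hC1 sub1] := r1 B hB.
  case: hphi0 => _ [_ /(_ C0) [/(_ hC0) [v0 [_ hv0]] _]].
  case: hphi1 => _ [_ /(_ C1) [/(_ hC1) [v1 [_ hv1]] _]].
  have e0 : phi0 m = phi0 m'.
    by rewrite (proj1 (hv0 m) (subsetP sub0 _ hmB)) (proj1 (hv0 m') (subsetP sub0 _ hm'B)).
  have e1 : phi1 m = phi1 m'.
    by rewrite (proj1 (hv1 m) (subsetP sub1 _ hmB)) (proj1 (hv1 m') (subsetP sub1 _ hm'B)).
  by rewrite /upair_eq e0 e1.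
move=> hno; exfalso.
have [x hx] := part_ne0 hp01 hA.
have [A' [hA' neA']] : exists A', A' \in J01 /\ A' != A.
  move/card_gt1P: hgt => [a [b [ha hb nab]]].
  case: (eqVneq a A) => [ea|nea]; last by exists a.
  by exists b; split => //; rewrite -ea eq_sym.
have [y hy] := part_ne0 hp01 hA'.
have hyA : y \notin A.
  apply/negP => hyA; apply/negP: neA'; apply/negPn/eqP.
  exact: part_disj hp01 hA' hA hy hyA.
have hK := part2set hx hyA.
case: hJall => hpJ rJ rP hmin.
have rJK : refines J01 [set A; ~: A].
  move=> D hD; case: (eqVneq D A) => [->|ne].
    by exists A; rewrite ?inE ?eqxx.
  exists (~: A); rewrite ?inE ?eqxx ?orbT //.
  apply/subsetP => z hz; rewrite inE; apply/negP => hzA.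
  by apply/negP: ne; apply/negPn/eqP; exact: part_disj hp01 hD hA hz hzA.
have rPK : refines Pi [set A; ~: A].
  move=> B hB; case: (boolP [exists z in B, z \in A]).
    move=> /existsP [z /andP [hzB hzA]]; exists A; rewrite ?inE ?eqxx //.
    apply/subsetP => w hw; apply/negPn/negP => hwA.
    move/negP: hno; apply; apply/existsP; exists B; rewrite hB /=.
    apply/existsP; exists z; rewrite hzB /=; apply/existsP; exists w; by rewrite hw hzA.
  move=> hn; exists (~: A); rewrite ?inE ?eqxx ?orbT //.
  apply/subsetP => w hw; rewrite inE; apply/negP => hwA.
  by move/negP: hn; apply; apply/existsP; exists w; rewrite hw.
have rK := hmin _ hK rJK rPK.
have [C hC] : exists C, Jall = [set C] by apply/cards1P/eqP.
have [C1 hC1 hxC] := @part_cover _ _ x hpJ.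
have [C2 hC2 hyC] := @part_cover _ _ y hpJ.
move: hC1 hC2; rewrite hC !inE => /eqP e1 /eqP e2; subst C1 C2.
have hCJ : C \in Jall by rewrite hC inE.
have [D hD sD] := rK C hCJ.
move: hD; rewrite !inE => /orP [] /eqP e; subst D.
  by move: hyA; rewrite (subsetP sD _ hyC).
by move: (subsetP sD _ hxC); rewrite inE hx.
Qed.
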